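(* The combinatorial tiling $K$ has finite local complexity: for every $r>0$ there are only finitely many patches of $K$ of edge-diameter less than $r$, up to cell-preserving isomorphisms between subcomplexes of $K$.
   Context: A combinatorial tiling is a 2-dimensional CW-complex whose underlying space is homeomorphic to the open unit disk; faces are closed 2-cells, edges closed 1-cells, vertices 0-cells. The subdivision rule $\omega$ acts on a pentagon (closed disk with five boundary vertices $v_1,\dots,v_5$ in cyclic order, indices mod 5): add a vertex $m_i$ in the interior of each edge $v_iv_{i+1}$, five interior vertices $c_1,\dots,c_5$, edges $c_ic_{i+1}$ and $c_im_i$; the face is replaced by the central pentagon $c_1\cdots c_5$ and the five petals $v_i\,m_i\,c_i\,c_{i-1}\,m_{i-1}$. Applying $\omega$ to every face gives the subdivision of a complex. $K_0$ is one pentagon, $K_n=\omega^n(K_0)$, $\iota_n:K_n\to K_{n+1}$ is the embedding of $K_n$ onto the central superpentagon $\omega^n(\text{central face of }\omega(K_0))$ of $K_{n+1}$ (central pentagon to central pentagon), and $K$ is the direct limit of $(K_n,\iota_n)$ (undecorated). A patch is a 2-dimensional subcomplex with finitely many cells that is a union of faces connected through chains of faces sharing edges. Edge-diameter is measured with the edge-path distance between vertices. *)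

(* Defs.v *)
(* A finite complex is represented by
   (number of vertex labels used, list of faces), each face being the cyclic
   list of its 5 boundary vertices (labels are natural numbers); edges are
   the pairs of cyclically consecutive vertices of faces. *)
From mathcomp Require Import all_boot.

Set Implicit Arguments.
Unset Strict Implicit.
Unset Printing Implicit Defensive.

Definition cplx := (nat * seq (seq nat))%type.

Definition uedge (a b : nat) : nat * nat := (minn a b, maxn a b).

Definition face_edges (F : seq nat) : seq (nat * nat) :=
  [seq uedge (nth 0 F i) (nth 0 F (i.+1 %% size F)) | i <- iota 0 (size F)].

Definition cedges (K : cplx) : seq (nat * nat) :=
  undup (flatten (map face_edges K.2)).

(* label of the new midpoint vertex of the edge ab in omega K *)
Definition mid (K : cplx) (a b : nat) : nat := K.1 + index (uedge a b) (cedges K).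

(* label of the i-th interior vertex c_i created in the j-th face of K *)
Definition ctr (K : cplx) (j i : nat) : nat := K.1 + size (cedges K) + 5 * j + i.

(* the six faces replacing face number j, F = [v_0;...;v_4]:
   central pentagon c_0...c_4 and petals v_i m_i c_i c_{i-1} m_{i-1} *)
Definition sub_face (K : cplx) (j : nat) (F : seq nat) : seq (seq nat) :=
  let c i := ctr K j (i %% 5) in
  let v i := nth 0 F (i %% 5) in
  [seq c i | i <- iota 0 5] ::
  [seq [:: v i; mid K (v i) (v i.+1); c i; c (i + 4); mid K (v (i + 4)) (v i)]
  | i <- iota 0 5].

Definition omega (K : cplx) : cplx :=
  (K.1 + size (cedges K) + 5 * size K.2,
   flatten [seq sub_face K j (nth [::] K.2 j) | j <- iota 0 (size K.2)]).

Definition K0 : cplx := (5, [:: [:: 0; 1; 2; 3; 4]]).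

Definition Kn (n : nat) : cplx := iter n omega K0.

(* Given a face-preserving vertex map f : A -> B (mapping each face list of A
   to a face list of B), the induced map omega(A) -> omega(B). *)
Definition omega_map (A B : cplx) (f : nat -> nat) (v : nat) : nat :=
  let nA := A.1 in
  let eA := cedges A in
  if v < nA then f v
  else if v < nA + size eA then
    let e := nth (0, 0) eA (v - nA) in mid B (f e.1) (f e.2)
  else
    let w := v - nA - size eA in
    ctr B (index (map f (nth [::] A.2 (w %/ 5))) B.2) (w %% 5).

(* iota_n : K_n -> K_{n+1}, embedding onto the central superpentagon:
   iota_0 sends the pentagon 0..4 onto the central pentagon 10..14 of K_1,
   and iota_{n+1} = omega(iota_n). *)
Fixpoint emb (n : nat) : nat -> nat :=
  match n with
  | 0 => fun v => 10 + v
  | n'.+1 => omega_map (Kn n') (Kn n) (emb n')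
  end.

Fixpoint lift (n k : nat) (v : nat) : nat :=
  match k with
  | 0 => v
  | k'.+1 => emb (n + k') (lift n k' v)
  end.

Definition adj (K : cplx) : rel nat := fun a b => uedge a b \in cedges K.

(* the edge-path distance in the direct limit K between (the images of) the
   vertices u, v of K_n is < r: some edge path of length < r joins them,
   which lives in some finite stage K_{n+k}. *)
Definition Kdist_lt (n u v r : nat) : Prop :=
  exists k (s : seq nat),
    path (adj (Kn (n + k))) (lift n k u) s /\
    last (lift n k u) s = lift n k v /\ size s < r.

Definition faces_adj : rel (seq nat) :=
  fun F G => has (fun e => e \in face_edges G) (face_edges F).

(* P is (the list of faces of) a patch of K_n, hence (via the canonical
   inclusion K_n -> K) a patch of K; every patch of K arises this way. *)
Definition is_patch (n : nat) (P : seq (seq nat)) : Prop :=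
  P != [::] /\ {subset P <= (Kn n).2} /\
  forall F G, F \in P -> G \in P ->
    exists s, path faces_adj F s /\ last F s = G /\ all (fun H => H \in P) s.

Definition Kdiam_lt (n : nat) (P : seq (seq nat)) (r : nat) : Prop :=
  forall u v, u \in flatten P -> v \in flatten P -> Kdist_lt n u v r.

Definition dih_eq (F G : seq nat) : bool :=
  has (fun k => (rot k F == G) || (rot k (rev F) == G)) (iota 0 (size F)).

Definition patch_iso (P Q : seq (seq nat)) : Prop :=
  exists phi : nat -> nat,
    {in flatten P &, injective phi} /\
    (forall F, F \in P -> exists2 G, G \in Q & dih_eq (map phi F) G) /\
    (forall G, G \in Q -> exists2 F, F \in P & dih_eq (map phi F) G).

(* Main.v *)
Require Import Defs.
From mathcomp Require Import all_boot zify.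
From Stdlib Require Import Classical.
Set Implicit Arguments. Unset Strict Implicit. Unset Printing Implicit Defensive.


Lemma uedgeC a b : uedge a b = uedge b a.
Proof. by rewrite /uedge minnC maxnC. Qed.

Lemma ue_inj a b c d : uedge a b = uedge c d -> (a = c /\ b = d) \/ (a = d /\ b = c).
Proof. rewrite /uedge; case => h1 h2; lia. Qed.

Lemma ue_g (g : nat -> nat) a b : uedge (g (uedge a b).1) (g (uedge a b).2) = uedge (g a) (g b).
Proof.
rewrite {1 2}/uedge /=; case: (leqP a b) => h //.
by rewrite /uedge minnC maxnC.
Qed.

Lemma ue_norm a b : uedge (uedge a b).1 (uedge a b).2 = uedge a b.
Proof. exact: (ue_g id). Qed.

Lemma face_edges_map (g : nat -> nat) F :
  face_edges (map g F) = map (fun e => uedge (g e.1) (g e.2)) (face_edges F).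
Proof.
rewrite /face_edges size_map -map_comp; apply/eq_in_map => i.
rewrite mem_iota add0n => /andP[_ hi] /=.
have h0 : 0 < size F by lia.
rewrite (nth_map 0) // (nth_map 0) ?ltn_pmod //.
by rewrite ue_g.
Qed.

Lemma fe_mem F e : e \in face_edges F ->
  exists a b, [/\ a \in F, b \in F & e = uedge a b].
Proof.
case/mapP => i; rewrite mem_iota add0n => /andP[_ hi] ->.
have h0 : 0 < size F by lia.
exists (nth 0 F i), (nth 0 F (i.+1 %% size F)); split => //; apply: mem_nth => //.
by rewrite ltn_pmod.
Qed.

Lemma fe5 a b c d e : face_edges [:: a;b;c;d;e] =
  [:: uedge a b; uedge b c; uedge c d; uedge d e; uedge e a].
Proof. reflexivity. Qed.

Definition face_ok N (F : seq nat) := (size F == 5) && uniq F && all (fun x => x < N) F.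

Lemma size5 (F : seq nat) : size F = 5 -> exists a b c d e, F = [:: a;b;c;d;e].
Proof.
case: F => [|a [|b [|c [|d [|e [|f F]]]]]] //= _; by exists a, b, c, d, e.
Qed.

Lemma ue_neq x y z w : (x != z) || (y != w) -> (x != w) || (y != z) -> uedge x y != uedge z w.
Proof.
move=> h1 h2; apply/eqP => /ue_inj [[e1 e2]|[e1 e2]].
- by move: h1; rewrite e1 e2 !eqxx.
- by move: h2; rewrite e1 e2 !eqxx.
Qed.

Lemma fe_uniq N F : face_ok N F -> uniq (face_edges F).
Proof.
case/andP => /andP[/eqP/size5 [a [b [c [d [e ->]]]]] hu] _.
rewrite fe5; move: hu; rewrite /= !inE !negb_or => /and5P[/and4P[hab hac had hae] /and3P[hbc hbd hbe] /andP[hcd hce] hde _].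
have hba : b != a by rewrite eq_sym.
have hca : c != a by rewrite eq_sym.
have hda : d != a by rewrite eq_sym.
have hea : e != a by rewrite eq_sym.
have hcb : c != b by rewrite eq_sym.
have hdb : d != b by rewrite eq_sym.
have heb : e != b by rewrite eq_sym.
have hdc : d != c by rewrite eq_sym.
have hec : e != c by rewrite eq_sym.
have hed : e != d by rewrite eq_sym.
by rewrite !ue_neq ?hab ?hac ?had ?hae ?hbc ?hbd ?hbe ?hcd ?hce ?hde ?hba ?hca ?hda ?hea ?hcb ?hdb ?heb ?hdc ?hec ?hed ?orbT.
Qed.

Lemma fe_size F : size (face_edges F) = size F.
Proof. by rewrite /face_edges size_map size_iota. Qed.

Lemma in_cedges K F e : F \in K.2 -> e \in face_edges F -> e \in cedges K.
Proof.
move=> hF he; rewrite /cedges mem_undup; apply/flattenP.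
exists (face_edges F) => //; exact: map_f.
Qed.

Lemma cedges_mem K e : e \in cedges K -> exists2 F, F \in K.2 & e \in face_edges F.
Proof. by rewrite /cedges mem_undup => /flattenP [s /mapP [F hF ->] he]; exists F. Qed.

Record Inv (A : cplx) : Prop := {
  inv_face : forall F, F \in A.2 -> face_ok A.1 F;
  inv_uniq : uniq A.2;
  inv_cv : forall y, count (fun F => y \in F) A.2 <= 4;
  inv_ce : forall e, count (fun F => e \in face_edges F) A.2 <= 2 }.

Definition tmpl : seq (seq nat) := [:: [:: 10;11;12;13;14]; [::0;5;10;14;9];
  [::1;6;11;10;5]; [::2;7;12;11;6]; [::3;8;13;12;7]; [::4;9;14;13;8]].
Definition gmap (A : cplx) j (F : seq nat) (t : nat) : nat :=
  if t < 5 then nth 0 F t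
  else if t < 10 then mid A (nth 0 F (t-5)) (nth 0 F ((t-4) %% 5))
  else ctr A j (t-10).
Lemma sub_face_tmpl A j F : sub_face A j F = map (map (gmap A j F)) tmpl.
Proof. reflexivity. Qed.

Definition TE := undup (flatten (map face_edges tmpl)).

Lemma tmpl_lab T t : T \in tmpl -> t \in T -> t < 15.
Proof.
have H : all (fun T => all (fun t => t < 15) T) tmpl by [].
move=> hT ht; exact: (allP (allP H T hT) t ht).
Qed.

Ltac normE := repeat match goal with
 | H : context[@size (Equality.sort ?T) (cedges ?A)] |- _ => change (@size (Equality.sort T) (cedges A)) with (@size (nat*nat) (cedges A)) in H
 | |- context[@size (Equality.sort ?T) (cedges ?A)] => change (@size (Equality.sort T) (cedges A)) with (@size (nat*nat) (cedges A)) end.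
Ltac slia := normE; lia.

Lemma mid_range (A : cplx) a b : uedge a b \in cedges A -> A.1 <= mid A a b < A.1 + size (cedges A).
Proof. rewrite /mid -index_mem => h; slia. Qed.

Lemma mid_inj (A : cplx) a b c d : uedge a b \in cedges A -> uedge c d \in cedges A ->
  mid A a b = mid A c d -> uedge a b = uedge c d.
Proof.
rewrite /mid => h1 h2 /addnI e.
by rewrite -(nth_index (0,0) h1) -(nth_index (0,0) h2) e.
Qed.

Lemma mid_sym (A : cplx) a b : mid A a b = mid A b a.
Proof. by rewrite /mid uedgeC. Qed.

Lemma g_old (A : cplx) j F t : t < 5 -> gmap A j F t = nth 0 F t.
Proof. by rewrite /gmap => ->. Qed.

Lemma fe_nth F i : size F = 5 -> i < 5 ->
  nth (0,0) (face_edges F) i = uedge (nth 0 F i) (nth 0 F (i.+1 %% 5)).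
Proof.
move=> hs hi; rewrite /face_edges (nth_map 0) ?size_iota ?hs // nth_iota //.
Qed.

Lemma g_mid (A : cplx) j F t : size F = 5 -> 5 <= t < 10 ->
  gmap A j F t = A.1 + index (nth (0,0) (face_edges F) (t-5)) (cedges A).
Proof.
move=> hs ht; rewrite /gmap ifF; last slia.
rewrite ifT; last slia.
rewrite fe_nth //; last slia.
by have -> : (t - 4) = (t - 5).+1 by slia.
Qed.

Lemma g_ctr (A : cplx) j F t : 10 <= t ->
  gmap A j F t = A.1 + size (cedges A) + 5 * j + (t - 10).
Proof. move=> ht; rewrite /gmap ifF; last slia. rewrite ifF //; slia. Qed.

Lemma g_old_range (A : cplx) j F t : face_ok A.1 F -> t < 5 ->
  gmap A j F t < A.1 /\ gmap A j F t \in F.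
Proof.
case/andP => /andP[/eqP hs _] hall ht; rewrite g_old //.
have hm : nth 0 F t \in F by apply: mem_nth; rewrite hs.
by split => //; exact: (allP hall).
Qed.

Lemma g_mid_range (A : cplx) j F t : face_ok A.1 F -> F \in A.2 -> 5 <= t < 10 ->
  [/\ A.1 <= gmap A j F t < A.1 + size (cedges A),
      nth (0,0) (cedges A) (gmap A j F t - A.1) = nth (0,0) (face_edges F) (t-5)
    & nth (0,0) (face_edges F) (t-5) \in face_edges F].
Proof.
move=> hok hF ht; have hs : size F = 5 by case/andP: hok => /andP[/eqP] .
rewrite g_mid //.
have hin : nth (0,0) (face_edges F) (t-5) \in face_edges F.
  by apply: mem_nth; rewrite fe_size hs; slia.
have hc := in_cedges hF hin.
have := hc; rewrite -index_mem => hi.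
split => //. slia.
by rewrite addKn nth_index.
Qed.

Lemma g_inj (A : cplx) j F : face_ok A.1 F -> F \in A.2 ->
  forall t t', t < 15 -> t' < 15 -> gmap A j F t = gmap A j F t' -> t = t'.
Proof.
move=> hok hF t t' ht ht' e.
have hs : size F = 5 by case/andP: hok => /andP[/eqP] .
have hu : uniq F by case/andP: hok => /andP[].
have hfu := fe_uniq hok.
case: (ltnP t 5) => h1; case: (ltnP t' 5) => h1'.
- move: e; rewrite !g_old // => e.
  by apply/eqP; rewrite -(nth_uniq 0 _ _ hu) ?hs // e.
- have [hr _] := g_old_range j hok h1.
  case: (ltnP t' 10) => h2'.
  + have [hr' _ _] := g_mid_range j hok hF (ltac:(slia) : 5 <= t' < 10). slia.
  + move: e; rewrite [gmap A j F t']g_ctr //; slia.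
- have [hr _] := g_old_range j hok h1'.
  case: (ltnP t 10) => h2.
  + have [hr' _ _] := g_mid_range j hok hF (ltac:(slia) : 5 <= t < 10). slia.
  + move: e; rewrite [gmap A j F t]g_ctr //; slia.
- case: (ltnP t 10) => h2; case: (ltnP t' 10) => h2'.
  + have [hr1 hn1 _] := g_mid_range j hok hF (ltac:(slia) : 5 <= t < 10).
    have [hr2 hn2 _] := g_mid_range j hok hF (ltac:(slia) : 5 <= t' < 10).
    have : nth (0,0) (face_edges F) (t-5) = nth (0,0) (face_edges F) (t'-5)
      by rewrite -hn1 -hn2 e.
    move/eqP; rewrite nth_uniq ?fe_size ?hs //; try slia.
  + have [hr1 _ _] := g_mid_range j hok hF (ltac:(slia) : 5 <= t < 10).
    move: e; rewrite [gmap A j F t']g_ctr //; slia.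
  + have [hr1 _ _] := g_mid_range j hok hF (ltac:(slia) : 5 <= t' < 10).
    move: e; rewrite [gmap A j F t]g_ctr //; slia.
  + move: e; rewrite !g_ctr //; slia.
Qed.


Lemma tcV t : t < 15 -> count (fun T => t \in T) tmpl = if t < 5 then 1 else if t < 10 then 2 else 3.
Proof. by do 15 (case: t => [|t] //). Qed.

Lemma TE_in T p : T \in tmpl -> p \in face_edges T -> p \in TE.
Proof. move=> hT hp; rewrite /TE mem_undup; apply/flattenP; exists (face_edges T) => //; exact: map_f. Qed.

Definition tcE p := count (fun T => p \in face_edges T) tmpl.

Lemma TE_prop : all (fun p => (p.1 <= p.2 < 15) && (p == uedge p.1 p.2) &&
  (((p.1 < 5) && (5 <= p.2 < 10) && (tcE p <= 1)) || ((10 <= p.2) && (tcE p <= 2)))) TE.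
Proof. by []. Qed.

Lemma ug_inj (A : cplx) j F : face_ok A.1 F -> F \in A.2 -> forall p q, p \in TE -> q \in TE ->
  uedge (gmap A j F p.1) (gmap A j F p.2) = uedge (gmap A j F q.1) (gmap A j F q.2) -> p = q.
Proof.
move=> hok hF p q hp hq e.
have /andP[/andP[hp1 /eqP hp2] _] := allP TE_prop p hp.
have /andP[/andP[hq1 /eqP hq2] _] := allP TE_prop q hq.
have gi := g_inj (j:=j) hok hF.
rewrite hp2 hq2.
move: hp1 hq1 => /andP[hp1 hp1'] /andP[hq1 hq1'].
have l1 : p.1 < 15 by apply: leq_ltn_trans hp1'.
have l2 : q.1 < 15 by apply: leq_ltn_trans hq1'.
case: (ue_inj e) => [[e1 e2]|[e1 e2]].
- by rewrite (gi _ _ l1 l2 e1) (gi _ _ hp1' hq1' e2).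
- by rewrite (gi _ _ l1 hq1' e1) (gi _ _ hp1' l2 e2) uedgeC.
Qed.

Lemma termV (A : cplx) j F y : face_ok A.1 F -> F \in A.2 ->
  count (fun G => y \in G) (sub_face A j F) <=
   if y < A.1 then (y \in F : nat) else
   if y < A.1 + size (cedges A) then 2 * (nth (0,0) (cedges A) (y - A.1) \in face_edges F)
   else 3 * (j == (y - A.1 - size (cedges A)) %/ 5).
Proof.
move=> hok hF; rewrite sub_face_tmpl count_map.
set g := gmap A j F.
have gi := g_inj (j:=j) hok hF.
case: (boolP (has (fun t => g t == y) (iota 0 15))).
- case/hasP => t0; rewrite mem_iota add0n => /andP[_ ht] /eqP <-.
  have -> : count (preim (map g) (fun G => g t0 \in G)) tmpl = count (fun T => t0 \in T) tmpl.
    apply: eq_in_count => T hT /=; apply/mapP/idP => [[t ht1 et]|h]; last by exists t0.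
    by rewrite (gi t0 t ht (tmpl_lab hT ht1) et).
  rewrite tcV; last slia.
  case: (ltnP t0 5) => h1.
  + have [hr hm] := g_old_range j hok h1.
    by rewrite /g hr hm.
  + case: (ltnP t0 10) => h2.
    * have [hr hn hm] := g_mid_range j hok hF (ltac:(slia) : 5 <= t0 < 10).
      rewrite /g ifF; last slia.
      rewrite ifT; last slia.
      by rewrite hn hm.
    * rewrite /g g_ctr // ifF; last slia.
      rewrite ifF; last slia.
      have -> : (A.1 + size (cedges A) + 5 * j + (t0 - 10) - A.1 - size (cedges A)) %/ 5 = j.
        by normE; lia.
      by rewrite eqxx.
- move=> hn.
  have -> : count (preim (map g) (fun G => y \in G)) tmpl = 0.
    apply/eqP; rewrite eqn0Ngt -has_count; apply/hasP => -[T hT /= /mapP [t ht ey]].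
    apply: (negP hn); apply/hasP; exists t; last by rewrite ey.
    by rewrite mem_iota add0n (tmpl_lab hT ht).
  by [].
Qed.

Lemma termE (A : cplx) j F e : face_ok A.1 F -> F \in A.2 ->
  count (fun G => e \in face_edges G) (sub_face A j F) <=
  if A.1 + size (cedges A) <= e.2 then 2 * (j == (e.2 - A.1 - size (cedges A)) %/ 5)
  else (nth (0,0) (cedges A) (e.2 - A.1) \in face_edges F : nat).
Proof.
move=> hok hF; rewrite sub_face_tmpl count_map.
set g := gmap A j F.
have ugi := ug_inj (j:=j) hok hF.
set ug := fun p : nat*nat => uedge (g p.1) (g p.2).
have hfe : forall T, face_edges (map g T) = map ug (face_edges T).
  by move=> T; rewrite face_edges_map.
case: (boolP (has (fun p => ug p == e) TE)).
- case/hasP => -[a b] hp0 /eqP ep; subst e.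
  have -> : count (preim (map g) (fun G => ug (a,b) \in face_edges G)) tmpl = tcE (a,b).
    apply: eq_in_count => T hT /=; rewrite hfe; apply/mapP/idP => [[p hp ep]|h]; last by exists (a,b).
    by rewrite (ugi _ _ hp0 (TE_in hT hp) ep).
  have /andP[/andP[hp1 /eqP hp2] hty] := allP TE_prop (a,b) hp0.
  rewrite /= in hp1 hty.
  move: hp1 => /andP[hle hlt].
  case/orP: hty => [/andP[/andP[ha hb] htc] | /andP[hb htc]].
  + have [hr _] := g_old_range j hok ha.
    have [hr' hn hm] := g_mid_range j hok hF hb.
    have e2 : (ug (a,b)).2 = g b.
      rewrite /ug /uedge /=; move: hr hr'; rewrite -/g; normE; lia.
    rewrite e2 ifF; last (move: hr' => /andP[_ h]; apply/negbTE; rewrite -ltnNge; exact: h).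
    by rewrite hn hm.
  + have gb := g_ctr A j F hb.
    have ga : g a < A.1 + size (cedges A) \/ g a = A.1 + size (cedges A) + 5 * j + (a - 10) /\ 10 <= a.
      case: (ltnP a 5) => h1.
        have [hr _] := g_old_range j hok h1; left; move: hr; rewrite -/g; slia.
      case: (ltnP a 10) => h2.
        have [hr _ _] := g_mid_range j hok hF (ltac:(slia) : 5 <= a < 10); left; move: hr; rewrite -/g; slia.
      right; split => //; exact: g_ctr.
    have e2a : A.1 + size (cedges A) <= (ug (a,b)).2.
      rewrite /ug /uedge /=; move: gb ga; rewrite -/g; normE; lia.
    have e2b : ((ug (a,b)).2 - A.1 - size (cedges A)) %/ 5 = j.
      rewrite /ug /uedge /=; move: gb ga; rewrite -/g; normE; lia.
    by rewrite e2a e2b eqxx.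
- move=> hn.
  have -> : count (preim (map g) (fun G => e \in face_edges G)) tmpl = 0.
    apply/eqP; rewrite eqn0Ngt -has_count; apply/hasP => -[T hT /=].
    rewrite hfe => /mapP [p hp ep].
    apply: (negP hn); apply/hasP; exists p; first exact: TE_in hT hp.
    by rewrite ep.
  by [].
Qed.


Lemma g_cases (A : cplx) j F t : face_ok A.1 F -> F \in A.2 -> t < 15 ->
  (t < 5 /\ gmap A j F t < A.1) \/
  (5 <= t < 10 /\ A.1 <= gmap A j F t < A.1 + size (cedges A)) \/
  (10 <= t /\ gmap A j F t = A.1 + size (cedges A) + 5 * j + (t - 10)).
Proof.
move=> hok hF ht.
case: (ltnP t 5) => h1; first by left; split => //; case: (g_old_range j hok h1).
case: (ltnP t 10) => h2.
  right; left; have h : 5 <= t < 10 by slia.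
  by split => //; case: (g_mid_range j hok hF h).
by right; right; split => //; rewrite g_ctr.
Qed.

Lemma omega_faces (A : cplx) G : G \in (omega A).2 ->
  exists2 j, j < size A.2 & exists2 T, T \in tmpl & G = map (gmap A j (nth [::] A.2 j)) T.
Proof.
rewrite /omega /= => /flattenP [s /mapP [j hj ->]]; rewrite sub_face_tmpl => /mapP [T hT ->].
by exists j; [move: hj; rewrite mem_iota; slia | exists T].
Qed.

Lemma map_inj15 (g : nat -> nat) (T1 T2 : seq nat) :
  (forall t t', t < 15 -> t' < 15 -> g t = g t' -> t = t') ->
  all (fun t => t < 15) T1 -> all (fun t => t < 15) T2 -> map g T1 = map g T2 -> T1 = T2.
Proof.
move=> gi; elim: T1 T2 => [|a T1 IH] [|b T2] //= /andP[ha h1] /andP[hb h2] [e1 e2].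
by rewrite (gi _ _ ha hb e1) (IH _ h1 h2 e2).
Qed.

Lemma tmpl_all15 T : T \in tmpl -> all (fun t => t < 15) T.
Proof. by move=> hT; apply/allP => t; apply: tmpl_lab. Qed.

Lemma uniq_flat (T : eqType) (f : nat -> seq T) l : uniq l ->
  (forall j, j \in l -> uniq (f j)) ->
  (forall j j' x, j \in l -> j' \in l -> x \in f j -> x \in f j' -> j = j') ->
  uniq (flatten (map f l)).
Proof.
elim: l => [|a l IH] //= /andP[hal hl] hu hd.
rewrite cat_uniq hu ?inE ?eqxx // IH //; last first.
- by move=> j j' x hj hj' h1 h2; apply: (hd j j' x) => //; rewrite inE ?hj ?hj' orbT.
- by move=> j hj; apply: hu; rewrite inE hj orbT.
rewrite andbT; apply/hasP => -[x /flattenP [s /mapP [j hj ->]] hx] hxa.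
have e := hd a j x (mem_head _ _) (ltac:(by rewrite inE hj orbT)) hxa hx.
by move: hal; rewrite e hj.
Qed.

Lemma sumn_le_iota m n (f h : nat -> nat) : (forall j, m <= j < m + n -> f j <= h j) ->
  sumn (map f (iota m n)) <= sumn (map h (iota m n)).
Proof.
elim: n m => [|n IH] m //= H.
apply: leq_add; first by apply: H; slia.
by apply: IH => j hj; apply: H; slia.
Qed.

Lemma sum_nth (s : seq (seq nat)) (h : seq nat -> nat) :
  sumn [seq h (nth [::] s j) | j <- iota 0 (size s)] = sumn (map h s).
Proof. by rewrite -[in RHS](mkseq_nth [::] s) /mkseq -map_comp. Qed.

Lemma sumn_mulb (T : Type) c (P : pred T) s : sumn (map (fun x => c * P x) s) = c * count P s.
Proof. induction s as [|x s IH]; first by rewrite /= muln0. by rewrite /= IH mulnDr. Qed.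

Lemma sumn_pick n c j0 : sumn [seq c * (j == j0) | j <- iota 0 n] <= c.
Proof.
rewrite (sumn_mulb c (fun j => j == j0)).
have -> : count (fun j => j == j0) (iota 0 n) = (j0 \in iota 0 n).
  by rewrite -count_uniq_mem ?iota_uniq.
by rewrite -{2}(muln1 c) leq_mul2l leq_b1 orbT.
Qed.

Lemma count_omega (A : cplx) (P : pred (seq nat)) : count P (omega A).2 =
  sumn [seq count P (sub_face A j (nth [::] A.2 j)) | j <- iota 0 (size A.2)].
Proof. by rewrite /omega /= count_flatten -map_comp. Qed.


Lemma hFj (A : cplx) : Inv A -> forall j, j < size A.2 ->
  nth [::] A.2 j \in A.2 /\ face_ok A.1 (nth [::] A.2 j).
Proof. move=> hA j hj; have h := mem_nth [::] hj; split => //; exact: inv_face hA _ h. Qed.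

Lemma tmpl_size T : T \in tmpl -> size T = 5.
Proof. have H : all (fun T => size T == 5) tmpl by []. by move=> hT; apply/eqP; apply: (allP H). Qed.

Lemma tmpl_uniq T : T \in tmpl -> uniq T.
Proof. have H : all uniq tmpl by []. by move=> hT; apply: (allP H). Qed.

Lemma tmpl_ctr T : T \in tmpl -> exists2 t, t \in T & 10 <= t < 15.
Proof.
have H : all (fun T => has (fun t => 10 <= t < 15) T) tmpl by [].
by move=> hT; have /hasP [t ht h] := allP H T hT; exists t.
Qed.

Lemma sub_face_uniq (A : cplx) j F : face_ok A.1 F -> F \in A.2 -> uniq (sub_face A j F).
Proof.
move=> hok hF; rewrite sub_face_tmpl map_inj_in_uniq //.
move=> T1 T2 h1 h2; apply: map_inj15; [exact: g_inj hok hF|exact: tmpl_all15|exact: tmpl_all15].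
Qed.

Lemma inv_omega (A : cplx) : Inv A -> Inv (omega A).
Proof.
move=> hA.
have hF := hFj hA.
split.
- move=> G /omega_faces [j hj [T hT ->]].
  have [hFm hok] := hF j hj.
  rewrite /face_ok size_map tmpl_size // eqxx /=.
  rewrite map_inj_in_uniq ?tmpl_uniq //; last first.
    move=> x y hx hy; apply: (g_inj hok hFm); apply: tmpl_lab hT _ => //.
  apply/allP => x /mapP [t ht ->].
  have ht15 := tmpl_lab hT ht; have := g_cases j hok hFm ht15; rewrite /omega /=; slia.
- rewrite /omega /=; apply: uniq_flat; first exact: iota_uniq.
    move=> j; rewrite mem_iota add0n => /andP[_ hj].
    by have [h1 h2] := hF j hj; apply: sub_face_uniq.
  move=> j j' x; rewrite !mem_iota !add0n => /andP[_ hj] /andP[_ hj'].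
  have [hm hok] := hF j hj; have [hm' hok'] := hF j' hj'.
  rewrite !sub_face_tmpl => /mapP [T hT ->] /mapP [T' hT' e].
  have [t ht ht1] := tmpl_ctr hT.
  have : gmap A j (nth [::] A.2 j) t \in map (gmap A j' (nth [::] A.2 j')) T'.
    by rewrite -e; apply: map_f.
  case/mapP => t' ht' et.
  have := g_cases j' hok' hm' (tmpl_lab hT' ht').
  rewrite -et g_ctr; last slia.
  have := tmpl_lab hT' ht'; move: ht1; slia.
- move=> y; rewrite count_omega.
  case: (ltnP y A.1) => h1.
    apply: (leq_trans (sumn_le_iota (h := fun j => (y \in nth [::] A.2 j : nat)) _)).
      move=> j hj; have [hm hok] := hF j (ltac:(slia)).
      by have := termV j y hok hm; rewrite h1.
    rewrite (sum_nth A.2 (fun F => (y \in F : nat))) sumn_count; exact: inv_cv.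
  case: (ltnP y (A.1 + size (cedges A))) => h2.
    apply: (leq_trans (sumn_le_iota (h := fun j => 2 * (nth (0,0) (cedges A) (y - A.1) \in face_edges (nth [::] A.2 j))) _)).
      move=> j hj; have [hm hok] := hF j (ltac:(slia)).
      by have := termV j y hok hm; rewrite [y < A.1]ltnNge h1 /= h2.
    rewrite (sum_nth A.2 (fun F => 2 * (nth (0,0) (cedges A) (y - A.1) \in face_edges F))) sumn_mulb.
    exact: (leq_mul (leqnn 2) (inv_ce hA _)).
  apply: (leq_trans (sumn_le_iota (h := fun j => 3 * (j == (y - A.1 - size (cedges A)) %/ 5)) _)).
    move=> j hj; have [hm hok] := hF j (ltac:(slia)).
    by have := termV j y hok hm; rewrite [y < A.1]ltnNge h1 /= [y < _ + _]ltnNge h2.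
  exact: leq_trans (sumn_pick _ _ _) _.
- move=> e; rewrite count_omega.
  case: (leqP (A.1 + size (cedges A)) e.2) => h1.
    apply: (leq_trans (sumn_le_iota (h := fun j => 2 * (j == (e.2 - A.1 - size (cedges A)) %/ 5)) _)).
      move=> j hj; have [hm hok] := hF j (ltac:(slia)).
      by have := termE j e hok hm; rewrite h1.
    exact: sumn_pick.
  apply: (leq_trans (sumn_le_iota (h := fun j => (nth (0,0) (cedges A) (e.2 - A.1) \in face_edges (nth [::] A.2 j) : nat)) _)).
    move=> j hj; have [hm hok] := hF j (ltac:(slia)).
    have := termE j e hok hm; rewrite ifF //; apply/negbTE; rewrite -ltnNge; exact: h1.
  rewrite (sum_nth A.2 (fun F => (nth (0,0) (cedges A) (e.2 - A.1) \in face_edges F : nat))) sumn_count.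
  exact: inv_ce.
Qed.


Definition FaceMap (A B : cplx) (f : nat -> nat) := forall F, F \in A.2 -> map f F \in B.2.
Definition EmbOK (A B : cplx) (f : nat -> nat) :=
  [/\ FaceMap A B f, (forall x y, x < A.1 -> y < A.1 -> f x = f y -> x = y)
    & forall x, x < A.1 -> f x < B.1].

Lemma adj_hom (A B : cplx) f a b : FaceMap A B f -> adj A a b -> adj B (f a) (f b).
Proof.
move=> hM; rewrite /adj => /cedges_mem [F hF he].
apply: (in_cedges (hM F hF)); rewrite face_edges_map.
by apply/mapP; exists (uedge a b) => //; rewrite ue_g.
Qed.

Lemma cedges_norm (A : cplx) e : Inv A -> e \in cedges A ->
  [/\ e = uedge e.1 e.2, e.1 < A.1 & e.2 < A.1].
Proof.
move=> hA /cedges_mem [F hF /fe_mem [a [b [ha hb ->]]]].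
have /andP[_ hall] := inv_face hA hF.
have la := allP hall a ha; have lb := allP hall b hb.
rewrite ue_norm; split => //; rewrite /uedge /=; slia.
Qed.

Lemma om_old (A B : cplx) f x : x < A.1 -> omega_map A B f x = f x.
Proof. by rewrite /omega_map => ->. Qed.

Lemma om_mid (A B : cplx) f a b : uedge a b \in cedges A ->
  omega_map A B f (mid A a b) = mid B (f a) (f b).
Proof.
move=> h; have [h1 h2] := andP (mid_range h).
rewrite /omega_map ifF; last slia.
rewrite ifT; last slia.
rewrite {1}/mid addKn nth_index //.
by rewrite /mid ue_g.
Qed.

Lemma om_ctr (A B : cplx) f j i : i < 5 ->
  omega_map A B f (ctr A j i) = ctr B (index (map f (nth [::] A.2 j)) B.2) i.
Proof.
move=> hi; rewrite /omega_map /ctr ifF; last slia.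
rewrite ifF; last slia.
have -> : (A.1 + size (cedges A) + 5 * j + i - A.1 - size (cedges A)) = j * 5 + i by slia.
by rewrite divnMDl // (divn_small hi) addn0 modnMDl (modn_small hi).
Qed.

Lemma om_g (A B : cplx) f j t : Inv A -> EmbOK A B f -> j < size A.2 -> t < 15 ->
  omega_map A B f (gmap A j (nth [::] A.2 j) t) =
  gmap B (index (map f (nth [::] A.2 j)) B.2) (map f (nth [::] A.2 j)) t.
Proof.
move=> hA [hM hi hr] hj ht.
have [hm hok] := hFj hA hj.
have hs : size (nth [::] A.2 j) = 5 by case/andP: hok => /andP[/eqP].
set F := nth [::] A.2 j.
case: (ltnP t 5) => h1.
  rewrite !g_old // om_old; last by case: (g_old_range j hok h1); rewrite g_old.
  by rewrite (nth_map 0) // hs.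
case: (ltnP t 10) => h2.
  rewrite /gmap ifF; last slia.
  rewrite ifT; last slia.
  rewrite ifF; last slia.
  rewrite ifT; last slia.
  have hin : uedge (nth 0 F (t - 5)) (nth 0 F ((t - 4) %% 5)) \in cedges A.
    apply: (in_cedges hm); have -> : t - 4 = (t-5).+1 by slia.
    rewrite -fe_nth //; last slia.
    by apply: mem_nth; rewrite fe_size hs; slia.
  rewrite om_mid // (nth_map 0) ?hs; last slia.
  by rewrite (nth_map 0) ?hs // ltn_pmod.
rewrite /gmap ifF; last slia.
rewrite ifF; last slia.
rewrite ifF; last slia.
rewrite ifF; last slia.
by rewrite om_ctr //; slia.
Qed.

Lemma map_injN N (g : nat -> nat) (T1 T2 : seq nat) :
  (forall t t', t < N -> t' < N -> g t = g t' -> t = t') ->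
  all (fun t => t < N) T1 -> all (fun t => t < N) T2 -> map g T1 = map g T2 -> T1 = T2.
Proof.
move=> gi; elim: T1 T2 => [|a T1 IH] [|b T2] //= /andP[ha h1] /andP[hb h2] [e1 e2].
by rewrite (gi _ _ ha hb e1) (IH _ h1 h2 e2).
Qed.

Lemma cedges_uniq K : uniq (cedges K).
Proof. exact: undup_uniq. Qed.

Lemma img_class (A B : cplx) f x : Inv A -> EmbOK A B f -> x < (omega A).1 ->
  (x < A.1 /\ omega_map A B f x = f x) \/
  (exists2 e, e \in cedges A & [/\ x = mid A e.1 e.2, omega_map A B f x = mid B (f e.1) (f e.2)
       & uedge (f e.1) (f e.2) \in cedges B]) \/
  (exists j i, [/\ j < size A.2, i < 5, x = ctr A j i,
     omega_map A B f x = ctr B (index (map f (nth [::] A.2 j)) B.2) i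
     & index (map f (nth [::] A.2 j)) B.2 < size B.2]).
Proof.
move=> hA [hM hi hr]; rewrite /omega /= => hx.
case: (ltnP x A.1) => h1; first by left; split => //; rewrite om_old.
case: (ltnP x (A.1 + size (cedges A))) => h2.
  right; left; set e := nth (0,0) (cedges A) (x - A.1).
  have he : e \in cedges A by apply: mem_nth; slia.
  have [en l1 l2] := cedges_norm hA he.
  have hxm : x = mid A e.1 e.2.
    rewrite /mid -en index_uniq ?cedges_uniq; slia.
  exists e => //; split => //.
    by rewrite hxm om_mid // -en.
  by apply: (adj_hom hM); rewrite /adj -en.
right; right.
exists ((x - A.1 - size (cedges A)) %/ 5), ((x - A.1 - size (cedges A)) %% 5).
have hd := divn_eq (x - A.1 - size (cedges A)) 5.
have hm : (x - A.1 - size (cedges A)) %% 5 < 5 by rewrite ltn_pmod.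
have hxc : x = ctr A ((x - A.1 - size (cedges A)) %/ 5) ((x - A.1 - size (cedges A)) %% 5).
  rewrite /ctr; slia.
have hj : (x - A.1 - size (cedges A)) %/ 5 < size A.2 by slia.
split => //.
  by rewrite {1}hxc om_ctr.
rewrite index_mem; apply: hM; exact: mem_nth.
Qed.

Lemma face_all_lt (A : cplx) F : Inv A -> F \in A.2 -> all (fun t => t < A.1) F.
Proof. by move=> hA hF; case/andP: (inv_face hA hF). Qed.

Lemma emb_ok_omega (A B : cplx) f : Inv A -> Inv B -> EmbOK A B f ->
  EmbOK (omega A) (omega B) (omega_map A B f).
Proof.
move=> hA hB hE; have hE' := hE; case: hE' => hM hi hr.
split.
- move=> G /omega_faces [j hj [T hT ->]].
  have [hm hok] := hFj hA hj.
  set j' := index (map f (nth [::] A.2 j)) B.2.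
  have hin : map f (nth [::] A.2 j) \in B.2 by apply: hM.
  have -> : map (omega_map A B f) (map (gmap A j (nth [::] A.2 j)) T) =
            map (gmap B j' (map f (nth [::] A.2 j))) T.
    rewrite -map_comp; apply/eq_in_map => t ht /=.
    by rewrite om_g //; apply: tmpl_lab hT ht.
  rewrite /omega /=; apply/flattenP.
  exists (sub_face B j' (nth [::] B.2 j')).
    by apply: map_f; rewrite mem_iota add0n index_mem.
  by rewrite nth_index // sub_face_tmpl; apply: map_f.
- move=> x y hx hy.
  case: (img_class hA hE hx) => [[x1 ex]|[[e he [xe ex hce]]|[j [i [hj hi5 xe ex hj']]]]];
  case: (img_class hA hE hy) => [[y1 ey]|[[e' he' [ye ey hce']]|[j2 [i2 [hj2 hi52 ye ey hj2']]]]];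
  rewrite ex ey.
  + exact: hi.
  + have := mid_range hce'; have := hr _ x1; slia.
  + have := hr _ x1; rewrite /ctr; slia.
  + have := mid_range hce; have := hr _ y1; slia.
  + move=> e1; have := mid_inj hce hce' e1.
    have [en l1 l2] := cedges_norm hA he; have [en' l1' l2'] := cedges_norm hA he'.
    case/ue_inj => [[a1 a2]|[a1 a2]].
      have b1 := hi _ _ l1 l1' a1; have b2 := hi _ _ l2 l2' a2.
      by rewrite xe ye b1 b2.
    have b1 := hi _ _ l1 l2' a1; have b2 := hi _ _ l2 l1' a2.
    by rewrite xe ye b1 b2 mid_sym.
  + have := mid_range hce; rewrite /ctr; slia.
  + have := hr _ y1; rewrite /ctr; slia.
  + have := mid_range hce'; rewrite /ctr; slia.
  + rewrite /ctr => e1.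
    have ei : i = i2 by slia.
    have ej : index (map f (nth [::] A.2 j)) B.2 = index (map f (nth [::] A.2 j2)) B.2 by slia.
    have hm1 := hM _ (mem_nth [::] hj); have hm2 := hM _ (mem_nth [::] hj2).
    have := nth_index [::] hm1; rewrite ej nth_index // => /esym em.
    have eF := map_injN hi (face_all_lt hA (mem_nth [::] hj)) (face_all_lt hA (mem_nth [::] hj2)) em.
    have : j = j2.
      by apply/eqP; rewrite -(nth_uniq [::] hj hj2 (inv_uniq hA)) eF.
    by move=> ejj; rewrite xe ye ejj ei.
- move=> x hx.
  case: (img_class hA hE hx) => [[x1 ex]|[[e he [xe ex hce]]|[j [i [hj hi5 xe ex hj']]]]];
  rewrite ex /omega /=.
  + have := hr _ x1; slia.
  + move: (mid_range hce); set m := mid B _ _; slia.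
  + rewrite /ctr; slia.
Qed.


Lemma inv_K0 : Inv K0.
Proof.
split => //.
- move=> F; rewrite inE => /eqP -> //.
- by move=> y /=; case: (y \in _).
- by move=> e /=; case: (e \in _).
Qed.

Lemma KnS n : Kn n.+1 = omega (Kn n).
Proof. by rewrite /Kn iterS. Qed.

Lemma inv_Kn n : Inv (Kn n).
Proof. elim: n => [|n IH]; first exact: inv_K0. by rewrite KnS; apply: inv_omega. Qed.

Lemma emb_ok n : EmbOK (Kn n) (Kn n.+1) (emb n).
Proof.
elim: n => [|n IH].
- split.
  + by move=> F; rewrite inE => /eqP ->.
  + by move=> x y _ _ /= /eqP; rewrite eqn_add2l => /eqP.
  + by move=> x /= hx; rewrite -(ltn_add2l 10) in hx.
- change (EmbOK (omega (Kn n)) (omega (Kn n.+1)) (omega_map (Kn n) (Kn n.+1) (emb n))).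
  apply: emb_ok_omega; [exact: inv_Kn| |exact: IH].
  exact: (inv_Kn n.+1).
Qed.

Lemma lift_add n k d v : Defs.lift n (k + d) v = Defs.lift (n + k) d (Defs.lift n k v).
Proof. elim: d => [|d IH]; first by rewrite addn0. by rewrite addnS /= IH addnA. Qed.

Lemma lift_adj m d a b : adj (Kn m) a b -> adj (Kn (m + d)) (Defs.lift m d a) (Defs.lift m d b).
Proof.
elim: d => [|d IH]; first by rewrite addn0.
move=> h; rewrite addnS /=; apply: (adj_hom (A := Kn (m + d))); first by case: (emb_ok (m + d)).
exact: IH.
Qed.

Lemma lift_path m d x s : path (adj (Kn m)) x s ->
  path (adj (Kn (m + d))) (Defs.lift m d x) (map (Defs.lift m d) s).
Proof.
elim: s x => [|y s IH] x //= /andP[h1 h2].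
by rewrite lift_adj // IH.
Qed.

Lemma Klift_inj n k x y : x < (Kn n).1 -> y < (Kn n).1 ->
  Defs.lift n k x = Defs.lift n k y -> x = y.
Proof.
have hr : forall k' x, x < (Kn n).1 -> Defs.lift n k' x < (Kn (n + k')).1.
  elim => [|k' IH] z hz; first by rewrite addn0.
  rewrite /= addnS; case: (emb_ok (n + k')) => _ _ h; exact: h _ (IH _ hz).
elim: k => [|k IH] hx hy //= e.
apply: IH => //; case: (emb_ok (n + k)) => _ hi _; exact: hi _ _ (hr _ _ hx) (hr _ _ hy) e.
Qed.

Definition nbrs (K : cplx) y := flatten [seq F <- K.2 | y \in F].

Lemma nbrs_size K y : Inv K -> size (nbrs K y) <= 20.
Proof.
move=> hK; rewrite /nbrs size_flatten /shape.
have -> : sumn (map size [seq F <- K.2 | y \in F]) = 5 * count (fun F => y \in F) K.2.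
  rewrite -size_filter; have : all (fun F => F \in K.2) [seq F <- K.2 | y \in F].
    by apply/allP => F; rewrite mem_filter => /andP[].
  elim: [seq F <- K.2 | y \in F] => [|F s IH] //= /andP[hF hs].
  have /andP[/andP[/eqP -> _] _] := inv_face hK hF.
  by rewrite IH // mulnS.
exact: (leq_mul (leqnn 5) (inv_cv hK y)).
Qed.

Lemma adj_nbrs K y z : adj K y z -> z \in nbrs K y.
Proof.
rewrite /adj => /cedges_mem [F hF /fe_mem [a [b [ha hb e]]]].
have [[e1 e2]|[e1 e2]] := ue_inj e.
- apply/flattenP; exists F; last by rewrite e2.
  by rewrite mem_filter e1 ha.
- apply/flattenP; exists F; last by rewrite e2.
  by rewrite mem_filter e1 hb.
Qed.

Fixpoint ball (K : cplx) j x : seq nat :=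
  match j with
  | 0 => [:: x]
  | j'.+1 => ball K j' x ++ flatten (map (nbrs K) (ball K j' x))
  end.

Lemma ball_size K j x : Inv K -> size (ball K j x) <= 21 ^ j.
Proof.
move=> hK; elim: j => [|j IH] //=.
rewrite size_cat size_flatten /shape -map_comp.
have : sumn (map (size \o nbrs K) (ball K j x)) <= 20 * size (ball K j x).
  elim: (ball K j x) => [|z s IHs] //=.
  by rewrite mulnS leq_add // nbrs_size.
move=> h; rewrite expnS.
apply: (leq_trans (leq_add (leqnn _) h)).
rewrite -{1}(mul1n (size _)) -mulnDl.
exact: leq_mul.
Qed.

Lemma ball_sub K j x : {subset ball K j x <= ball K j.+1 x}.
Proof. by move=> z hz /=; rewrite mem_cat hz. Qed.

Lemma ball_mono K j d x : {subset ball K j x <= ball K (j + d) x}.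
Proof. elim: d => [|d IH] z hz; first by rewrite addn0. rewrite addnS; apply: ball_sub; exact: IH. Qed.

Lemma ball_path K x s : path (adj K) x s -> last x s \in ball K (size s) x.
Proof.
elim/last_ind: s => [|s z IH] /=; first by rewrite inE.
rewrite rcons_path => /andP[hp ha].
rewrite last_rcons size_rcons /= mem_cat; apply/orP; right.
apply/flattenP; exists (nbrs K (last x s)); first by apply: map_f; exact: IH.
exact: adj_nbrs.
Qed.


Lemma ex_max (V : seq nat) (Q : nat -> nat -> Prop) :
  (forall v, v \in V -> exists k, Q v k) ->
  exists K, forall v, v \in V -> exists2 k, k <= K & Q v k.
Proof.
elim: V => [|a V IH] H; first by exists 0.
have [ka hka] := H a (mem_head _ _).
have [K' hK'] := IH (fun v hv => H v (ltac:(by rewrite inE hv orbT))).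
exists (maxn ka K') => v; rewrite inE => /orP [/eqP ->|hv].
  by exists ka => //; rewrite leq_maxl.
have [k hk hq] := hK' v hv; exists k => //; exact: leq_trans hk (leq_maxr _ _).
Qed.

Lemma patch_face_ok n P F : is_patch n P -> F \in P -> face_ok (Kn n).1 F.
Proof. by case=> _ [hs _] hF; apply: (inv_face (inv_Kn n)); apply: hs. Qed.

Lemma patch_vbound n P r : is_patch n P -> Kdiam_lt n P r ->
  size (undup (flatten P)) <= 21 ^ r.
Proof.
move=> hP hD; have hP' := hP; case: hP' => hne [hsub _].
have [F0 hF0] : exists F0, F0 \in P by case: P hne {hD hP hsub} => [|F P] //; exists F; exact: mem_head.
have /andP[/andP[/eqP hs0 _] _] := patch_face_ok hP hF0.
set u0 := nth 0 F0 0.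
have hu0 : u0 \in flatten P by apply/flattenP; exists F0 => //; apply: mem_nth; rewrite hs0.
set V := undup (flatten P).
have [K hK] := ex_max (Q := fun v k => exists s : seq nat,
    path (adj (Kn (n + k))) (Defs.lift n k u0) s /\
    last (Defs.lift n k u0) s = Defs.lift n k v /\ size s < r) (V := V)
  (fun v hv => hD u0 v hu0 (ltac:(by rewrite mem_undup in hv))).
have hball : forall v, v \in V -> Defs.lift n K v \in ball (Kn (n + K)) r (Defs.lift n K u0).
  move=> v hv; have [k hk [s [hp [hl hsz]]]] := hK v hv.
  have e0 : Defs.lift n K u0 = Defs.lift (n + k) (K - k) (Defs.lift n k u0).
    by rewrite -lift_add subnKC.
  have := ball_path (lift_path (K - k) hp).
  rewrite last_map hl -lift_add subnKC // size_map -e0 -addnA subnKC // => h.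
  have -> : r = size s + (r - size s) by rewrite subnKC // ltnW.
  exact: ball_mono.
have hlt : forall v, v \in V -> v < (Kn n).1.
  move=> v; rewrite mem_undup => /flattenP [F hF hv].
  have /andP[_ hall] := patch_face_ok hP hF; exact: (allP hall).
have hu : uniq (map (Defs.lift n K) V).
  rewrite map_inj_in_uniq ?undup_uniq // => x y hx hy e.
  exact: (Klift_inj (hlt _ hx) (hlt _ hy) e).
rewrite -(size_map (Defs.lift n K)).
apply: (leq_trans (uniq_leq_size hu _)); last exact: (@ball_size (Kn (n+K)) r (Defs.lift n K u0) (inv_Kn _)).
by move=> z /mapP [v hv ->]; apply: hball.
Qed.


Fixpoint subs (s : seq (seq nat)) : seq (seq (seq nat)) :=
  match s with
  | [::] => [:: [::]]
  | x :: t => subs t ++ map (cons x) (subs t)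
  end.

Lemma filter_subs (p : pred (seq nat)) s : filter p s \in subs s.
Proof.
elim: s => [|x s IH] //=.
by case: (p x); rewrite mem_cat ?IH // map_f ?orbT.
Qed.

Fixpoint lists (k m : nat) : seq (seq nat) :=
  match k with
  | 0 => [:: [::]]
  | k'.+1 => flatten [seq [seq x :: l | l <- lists k' m] | x <- iota 0 m]
  end.

Lemma lists_mem k m l : size l = k -> all (fun x => x < m) l -> l \in lists k m.
Proof.
elim: k l => [|k IH] [|x l] //= [hs] /andP[hx hl].
apply/flattenP; exists [seq x :: l0 | l0 <- lists k m].
  by apply: map_f; rewrite mem_iota.
by apply: map_f; apply: IH.
Qed.

Definition idx (P : seq (seq nat)) x := index x (undup (flatten P)).
Definition canon (P : seq (seq nat)) := map (map (idx P)) P.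
Definition Keys M := flatten [seq [seq (m, SS) | SS <- subs (lists 5 m)] | m <- iota 0 M.+1].
Definition mt (p : nat * seq (seq nat)) (key : nat * seq (seq nat)) :=
  size (undup (flatten p.2)) = key.1 /\ canon p.2 =i key.2.

Lemma choose_L (good : nat * seq (seq nat) -> Prop) (keys : seq (nat * seq (seq nat))) :
  exists L : seq (nat * seq (seq nat)), (forall p, p \in L -> good p) /\
    (forall key, key \in keys -> (exists p, good p /\ mt p key) -> exists2 p, p \in L & mt p key).
Proof.
elim: keys => [|k keys [L [h1 h2]]]; first by exists [::].
case: (classic (exists p, good p /\ mt p k)) => [[p [gp mp]]|hn].
- exists (p :: L); split.
    by move=> q; rewrite inE => /orP [/eqP ->|/h1].
  move=> key; rewrite inE => /orP [/eqP -> _|hk he]; first by exists p; rewrite ?mem_head.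
  by have [q hq mq] := h2 key hk he; exists q; rewrite // inE hq orbT.
- exists L; split => // key; rewrite inE => /orP [/eqP -> he|hk he]; first by case: (hn he).
  exact: h2.
Qed.

Lemma nth_idx Q G : all (fun x => x \in flatten Q) G ->
  map (nth 0 (undup (flatten Q))) (map (idx Q) G) = G.
Proof.
move=> h; rewrite -map_comp -[RHS]map_id; apply/eq_in_map => x hx /=.
by rewrite /idx nth_index // mem_undup; apply: (allP h).
Qed.

Lemma face_in_flat (P : seq (seq nat)) F : F \in P -> all (fun x => x \in flatten P) F.
Proof. by move=> hF; apply/allP => x hx; apply/flattenP; exists F. Qed.

Lemma dih_refl (G : seq nat) : 0 < size G -> dih_eq G G.
Proof.
move=> h; rewrite /dih_eq; apply/hasP; exists 0; last by rewrite rot0 eqxx.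
by rewrite mem_iota.
Qed.


Theorem theoremt :
  forall r : nat, 0 < r ->
  exists L : seq (nat * seq (seq nat)),
    (forall p, p \in L -> is_patch p.1 p.2 /\ Kdiam_lt p.1 p.2 r) /\
    (forall (n : nat) (P : seq (seq nat)),
        is_patch n P -> Kdiam_lt n P r ->
        exists2 p, p \in L & patch_iso P p.2).
Proof.
move=> r _.
have [L [hL1 hL2]] := choose_L (fun p => is_patch p.1 p.2 /\ Kdiam_lt p.1 p.2 r) (Keys (21 ^ r)).
exists L; split; first exact: hL1.
move=> n P hP hD.
set V := undup (flatten P); set m := size V.
have hm : m <= 21 ^ r := patch_vbound hP hD.
have hcl : {subset canon P <= lists 5 m}.
  move=> T /mapP [F hF ->]; apply: lists_mem.
    by rewrite size_map; have /andP[/andP[/eqP -> _] _] := patch_face_ok hP hF.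
  apply/allP => x /mapP [y hy ->]; rewrite /idx index_mem mem_undup.
  by apply/flattenP; exists F.
set SS := filter (fun T => T \in canon P) (lists 5 m).
have hkey : (m, SS) \in Keys (21 ^ r).
  apply/flattenP; exists [seq (m, SS0) | SS0 <- subs (lists 5 m)].
    by apply: (map_f (fun m0 => [seq (m0, SS0) | SS0 <- subs (lists 5 m0)])); rewrite mem_iota add0n ltnS.
  by apply: map_f; apply: filter_subs.
have hmt : mt (n, P) (m, SS).
  split => // T; rewrite /SS mem_filter /=.
  by case hT: (T \in canon P) => //=; rewrite hcl.
have [p hp [hsz hc]] := hL2 _ hkey (ex_intro _ (n, P) (conj (conj hP hD) hmt)).
have [hgP hgD] := hL1 p hp.
exists p => //.
set Vp := undup (flatten p.2).
rewrite /= in hsz hc.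
have hcP : canon P =i SS by case: hmt => _ h.
pose phi x := nth 0 Vp (idx P x).
have mapphi : forall F G, all (fun x => x \in flatten p.2) G ->
    map (idx P) F = map (idx p.2) G -> map phi F = G.
  move=> F G hG e; rewrite (_ : map phi F = map (nth 0 Vp) (map (idx P) F)); last by rewrite -map_comp.
  by rewrite e nth_idx.
have sz5 : forall G, G \in p.2 -> 0 < size G.
  by move=> G hG; have /andP[/andP[/eqP -> _] _] := patch_face_ok hgP hG.
exists phi; split; [|split].
- move=> x y hx hy; rewrite /phi => e.
  have hx' : x \in V by rewrite mem_undup.
  have hy' : y \in V by rewrite mem_undup.
  have lx : idx P x < size Vp by rewrite hsz /idx index_mem.
  have ly : idx P y < size Vp by rewrite hsz /idx index_mem.
  move/eqP: e; rewrite nth_uniq ?undup_uniq // => /eqP e.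
  by rewrite -(nth_index 0 hx') -(nth_index 0 hy'); rewrite /idx in e; rewrite e.
- move=> F hF.
  have : map (idx P) F \in canon p.2 by rewrite hc -hcP; apply: map_f.
  case/mapP => G hG e.
  exists G => //; rewrite (mapphi F G (face_in_flat hG) e); exact: dih_refl (sz5 G hG).
- move=> G hG.
  have : map (idx p.2) G \in canon P by rewrite hcP -hc; apply: map_f.
  case/mapP => F hF e.
  exists F => //; rewrite (mapphi F G (face_in_flat hG) (esym e)); exact: dih_refl (sz5 G hG).
Qed.
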